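(* Let $h\ge0$ and $i\le h$ be integers. Let $\Phi(z)=\sum_{n\ge0}c_nz^n$, where $c_n$ is the number of Deutsch paths of $n$ steps from $(0,0)$ to $(n,i)$ that never go above level $h$, with no lower boundary. Let $v=v(z)$ be the power series with $v(0)=0$ satisfying $z=\frac{v}{1+v+v^2}$. Then $$\Phi(z)=\frac{(1+v)^{-i-2}\,v\,(1-v^{h+1})(1+v+v^2)}{1-v}\quad\text{for } i<0,$$ $$\Phi(z)=\frac{v^{i}(1-v^{2-i+h})(1+v+v^2)}{(1-v)(1+v)^{i+2}}\quad\text{for } 0\le i\le h.$$
   Context: A Deutsch path is a lattice path whose steps are up-steps $(1,1)$ and down-steps $(1,-k)$ for any integer $k\ge1$. The series $v$ is given explicitly by $v=\frac{1-z-\sqrt{1-2z-3z^2}}{2z}$. *)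

(* Defs.v *)
From mathcomp Require Import all_boot all_order all_algebra.
Set Implicit Arguments. Unset Strict Implicit. Unset Printing Implicit Defensive.
Import Order.TTheory GRing.Theory Num.Theory.
Local Open Scope ring_scope.

Definition fps := nat -> rat.

Definition fps_C (c : rat) : fps := fun n => if n == 0%N then c else 0.
Definition fps_X : fps := fun n => if n == 1%N then 1 else 0.
Definition fps_add (f g : fps) : fps := fun n => f n + g n.
Definition fps_opp (f : fps) : fps := fun n => - f n.
Definition fps_sub (f g : fps) : fps := fps_add f (fps_opp g).
Definition fps_mul (f g : fps) : fps :=
  fun n => \sum_(k < n.+1) f k * g (n - k)%N.
Definition fps_pow (f : fps) (m : nat) : fps := iter m (fps_mul f) (fps_C 1).

(* Multiplicative inverse of a series with nonzero constant term:
   g 0 = 1 / f 0,  g n = - (1 / f 0) * sum_{k=1}^{n} f k * g (n - k). *)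
Fixpoint fps_inv_upto (f : fps) (n : nat) : seq rat :=
  match n with
  | 0%N => [:: (f 0%N)^-1]
  | m.+1 => let s := fps_inv_upto f m in
            rcons s (- (f 0%N)^-1 *
                     \sum_(k < m.+1) f k.+1 * nth 0 s (m - k)%N)
  end.
Definition fps_inv (f : fps) : fps := fun n => nth 0 (fps_inv_upto f n) n.
Definition fps_div (f g : fps) : fps := fps_mul f (fps_inv g).

Definition fps_zpow (f : fps) (z : int) : fps :=
  match z with
  | Posz m => fps_pow f m
  | Negz m => fps_pow (fps_inv f) m.+1
  end.

(* Deutsch paths: a path of n steps is the sequence of its vertical
   displacements; a step is an up-step (+1) or a down-step -k with k >= 1. *)
Definition deutsch_step (s : int) : bool := (s == 1) || (s <= -1).

Definition path_heights (p : seq int) : seq int := 0 :: scanl +%R 0 p.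

Definition bounded_deutsch_path (n : nat) (h i : int) (p : seq int) : bool :=
  [&& size p == n, all deutsch_step p,
      all (fun y => y <= h) (path_heights p) & \sum_(s <- p) s == i].

Definition is_count {T : eqType} (P : pred T) (x : rat) : Prop :=
  exists s : seq T, [/\ uniq s, (forall t, (t \in s) = P t) & x = (size s)%:R].

(* Main.v *)
From HB Require Import structures.
Require Import Defs.
From mathcomp Require Import all_boot all_order all_algebra.
From mathcomp Require Import boolp.
From mathcomp Require Import ring zify.
Set Implicit Arguments. Unset Strict Implicit. Unset Printing Implicit Defensive.
Import Order.TTheory GRing.Theory Num.Theory.
Local Open Scope ring_scope.

Definition S : Type := fps.
HB.instance Definition _ := gen_eqMixin S.
HB.instance Definition _ := gen_choiceMixin S.

Lemma fext (f g : fps) : f =1 g -> f = g.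
Proof. exact: funext. Qed.

Lemma S_addA : associative (fps_add : S -> S -> S).
Proof. by move=> f g k; apply: fext => n; rewrite /fps_add addrA. Qed.
Lemma S_addC : commutative (fps_add : S -> S -> S).
Proof. by move=> f g; apply: fext => n; rewrite /fps_add addrC. Qed.
Lemma S_add0 : left_id (fps_C 0 : S) fps_add.
Proof. by move=> f; apply: fext => n; rewrite /fps_add /fps_C; case: eqP => _; rewrite add0r. Qed.
Lemma S_addN : left_inverse (fps_C 0 : S) fps_opp fps_add.
Proof. by move=> f; apply: fext => n; rewrite /fps_add /fps_opp /fps_C addNr; case: eqP. Qed.

HB.instance Definition _ := GRing.isZmodule.Build S S_addA S_addC S_add0 S_addN.

Definition tr (n : nat) (f : fps) : {poly rat} := \poly_(i < n.+1) f i.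

Lemma mulE (f g : fps) n : fps_mul f g n = (tr n f * tr n g)`_n.
Proof.
rewrite coefM /fps_mul; apply: eq_bigr => k _.
by rewrite !coef_poly ltnS leq_ord ltnS leq_subr.
Qed.

Lemma coefM_eq (p p' q q' : {poly rat}) n :
  (forall j, (j <= n)%N -> p`_j = p'`_j) -> (forall j, (j <= n)%N -> q`_j = q'`_j) ->
  (p * q)`_n = (p' * q')`_n.
Proof.
move=> Hp Hq; rewrite !coefM; apply: eq_bigr => k _.
by rewrite Hp ?Hq ?leq_subr // -ltnS.
Qed.

Lemma tr_mul (f g : fps) n j : (j <= n)%N -> (tr n (fps_mul f g))`_j = (tr n f * tr n g)`_j.
Proof.
move=> jn; rewrite coef_poly ltnS jn mulE; apply: coefM_eq => l lj;
  by rewrite !coef_poly !ltnS lj (leq_trans lj jn).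
Qed.

Lemma S_mulA : associative (fps_mul : S -> S -> S).
Proof.
move=> f g k; apply: fext => n; rewrite !mulE.
rewrite (@coefM_eq _ (tr n f) _ (tr n g * tr n k)) //; last by move=> j jn; rewrite tr_mul.
rewrite [RHS](@coefM_eq _ (tr n f * tr n g) _ (tr n k)) //; last by move=> j jn; rewrite tr_mul.
by rewrite mulrA.
Qed.

Lemma S_mulC : commutative (fps_mul : S -> S -> S).
Proof. by move=> f g; apply: fext => n; rewrite !mulE mulrC. Qed.

Lemma S_mul1 : left_id (fps_C 1 : S) fps_mul.
Proof.
move=> f; apply: fext => n; rewrite /fps_mul big_ord_recl /fps_C /= mul1r subn0 big1 ?addr0 //.
by move=> i _; rewrite mul0r.
Qed.

Lemma S_mulDl : left_distributive (fps_mul : S -> S -> S) fps_add.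
Proof.
move=> f g k; apply: fext => n; rewrite /fps_mul /fps_add -big_split /=.
by apply: eq_bigr => i _; rewrite mulrDl.
Qed.

Lemma S_one_neq0 : (fps_C 1 : S) != fps_C 0.
Proof. apply/eqP => /(congr1 (fun f : S => f 0%N)); rewrite /fps_C /=; move/eqP; by rewrite oner_eq0. Qed.

HB.instance Definition _ := GRing.Zmodule_isComNzRing.Build S S_mulA S_mulC S_mul1 S_mulDl S_one_neq0.

Lemma inv_upto_size (f : fps) n : size (fps_inv_upto f n) = n.+1.
Proof. by elim: n => [|n IH] //=; rewrite size_rcons IH. Qed.

Lemma inv_upto_nth (f : fps) n m k : (k <= n)%N -> (n <= m)%N ->
  nth 0 (fps_inv_upto f m) k = nth 0 (fps_inv_upto f n) k.
Proof.
move=> kn; elim: m => [|m IH]; first by rewrite leqn0 => /eqP->.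
rewrite leq_eqVlt => /orP[/eqP->//|]; rewrite ltnS => nm.
by rewrite /= nth_rcons inv_upto_size (leq_ltn_trans kn (leq_ltn_trans nm (ltnSn m))) IH.
Qed.

Lemma inv0 (f : fps) : fps_inv f 0%N = (f 0%N)^-1.
Proof. by []. Qed.

Lemma invS (f : fps) n : fps_inv f n.+1 =
  - (f 0%N)^-1 * \sum_(k < n.+1) f k.+1 * fps_inv f (n - k)%N.
Proof.
rewrite /fps_inv /= nth_rcons inv_upto_size ltnn eqxx; congr (_ * _).
apply: eq_bigr => k _; congr (_ * _).
by rewrite (@inv_upto_nth f (n - k) n) // leq_subr.
Qed.

Lemma mul_inv (f : fps) : f 0%N != 0 -> fps_mul f (fps_inv f) = fps_C 1.
Proof.
move=> f0; apply: fext => -[|n]; rewrite /fps_mul /fps_C /=.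
  by rewrite big_ord1 inv0 mulfV.
rewrite big_ord_recl subn0 invS mulrA mulrN mulfV // mulN1r.
rewrite -[RHS](addNr (\sum_(k < n.+1) f k.+1 * fps_inv f (n - k)%N)); congr (_ + _).
Qed.

Definition S_unit : {pred S} := fun f : S => f 0%N != 0.
Definition S_inv (f : S) : S := if f 0%N != 0 then fps_inv f else f.

Lemma mul0E (f g : fps) : fps_mul f g 0%N = f 0%N * g 0%N.
Proof. by rewrite /fps_mul big_ord1. Qed.

Lemma S_mulVx : {in S_unit, left_inverse 1 S_inv *%R}.
Proof.
move=> f f0; rewrite /S_inv (_ : f 0%N != 0 = true) //.
by rewrite [LHS]S_mulC mul_inv.
Qed.

Lemma S_unitPl : forall x y : S, y * x = 1 -> S_unit x.
Proof.
move=> x y /(congr1 (fun f : S => f 0%N)) /=; rewrite /S_unit [_ 0%N]mul0E /=.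
rewrite /GRing.one /= /fps_C /= => H; apply/eqP => H0; move: H; rewrite H0 mulr0 => /eqP; by rewrite eq_sym oner_eq0.
Qed.

Lemma S_invr_out : {in [predC S_unit], S_inv =1 id}.
Proof. move=> f Hf; rewrite /S_inv ifN //; move: Hf; by rewrite inE. Qed.

HB.instance Definition _ := GRing.ComNzRing_hasMulInverse.Build S S_mulVx S_unitPl S_invr_out.

Lemma unitS (f : S) : (f \is a GRing.unit) = (f 0%N != 0).
Proof. by []. Qed.

Lemma c0_add (f g : S) : (f + g) 0%N = f 0%N + g 0%N. Proof. by []. Qed.
Lemma c0_opp (f : S) : (- f) 0%N = - f 0%N. Proof. by []. Qed.
Lemma c0_mul (f g : S) : (f * g) 0%N = f 0%N * g 0%N. Proof. exact: mul0E. Qed.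
Lemma c0_one : (1 : S) 0%N = 1. Proof. by []. Qed.
Lemma c0_exp (f : S) k : (f ^+ k) 0%N = f 0%N ^+ k.
Proof. by elim: k => [|k IH]; rewrite ?expr0 // !exprS c0_mul IH. Qed.

Lemma cD (f g : S) n : (f + g) n = f n + g n. Proof. by []. Qed.
Lemma cN (f : S) n : (- f) n = - f n. Proof. by []. Qed.
Lemma cB (f g : S) n : (f - g) n = f n - g n. Proof. by []. Qed.
Lemma c0 n : (0 : S) n = 0. Proof. by rewrite /GRing.zero /= /fps_C; case: eqP. Qed.
Lemma c1 n : (1 : S) n = (n == 0%N)%:R. Proof. by rewrite /GRing.one /= /fps_C; case: eqP. Qed.
Lemma cnat (b : nat) n : (b%:R : S) n = (n == 0%N)%:R * b%:R.
Proof.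
elim: b => [|b IH]; first by rewrite mulr0n c0 mulr0.
by rewrite !mulrS cD IH c1 mulrDr mulr1.
Qed.
Lemma csum (F : nat -> S) t n : (\sum_(m < t) F m) n = \sum_(m < t) F m n.
Proof.
elim: t => [|t IH]; first by rewrite !big_ord0 c0.
by rewrite !big_ord_recr -IH.
Qed.
Lemma cX0 (f : S) : ((fps_X : S) * f) 0%N = 0.
Proof. by rewrite c0_mul /fps_X /= mul0r. Qed.
Lemma cXS (f : S) n : ((fps_X : S) * f) n.+1 = f n.
Proof.
rewrite /GRing.mul /= /fps_mul big_ord_recl big_ord_recl /fps_X /= mul0r add0r mul1r.
rewrite big1 ?addr0 ?subSS ?subn0 // => i _; by rewrite mul0r.
Qed.
Section Alg.
Variable R : comRingType.
Variable v : R.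
Variable s : nat.
Definition pp (t : nat) : R :=
  if (t <= s)%N then v ^+ (s - t) * (1 + v) ^+ t * (1 - v ^+ t.+2)
  else v * (1 - v ^+ s.+1) * (1 + v) ^+ t.
Definition dd (t : nat) : R := (t == s)%:R.
Definition KK : R := 1 + v + v * v.
Definition DD : R := (1 - v) * (1 + v) ^+ s.+2.

Lemma e0 : KK * pp 0 = dd 0 * DD + v * pp 1.
Proof.
rewrite /pp /dd /DD /KK; case: s => [|d] /=.
  rewrite !expr0 !mulr1 !mul1r !exprS !expr0; ring.
rewrite subSS !subn0 !exprS !expr0; ring.
Qed.

Lemma e1 t : KK * (pp t.+1 - pp t) = (dd t.+1 - dd t) * DD + v * (pp t.+2 - pp t.+1 + pp t).
Proof.
rewrite /pp /dd /DD /KK.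
have [lt|[gt|eq]] : (t.+2 <= s \/ s <= t \/ t.+1 = s)%N by lia.
- rewrite (_ : (t <= s)%N = true); last by lia.
  rewrite (_ : (t.+1 <= s)%N = true); last by lia.
  rewrite (_ : (t.+2 <= s)%N = true); last by lia.
  rewrite (_ : (t.+1 == s) = false); last by lia.
  rewrite (_ : (t == s) = false); last by lia.
  rewrite (_ : (s - t = (s - t.+2).+2)%N); last by lia.
  rewrite (_ : (s - t.+1 = (s - t.+2).+1)%N); last by lia.
  set d := (s - t.+2)%N.
  rewrite /= !exprS; ring.
- rewrite (_ : (t <= s)%N = (t == s)); last by lia.
  rewrite (_ : (t.+1 <= s)%N = false); last by lia.
  rewrite (_ : (t.+2 <= s)%N = false); last by lia.
  rewrite (_ : (t.+1 == s) = false); last by lia.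
  case: eqP => [->|_].
    rewrite subnn /= expr0 !exprS; ring.
  rewrite /= !exprS; ring.
- rewrite (_ : (t <= s)%N = true); last by lia.
  rewrite (_ : (t.+1 <= s)%N = true); last by lia.
  rewrite (_ : (t.+2 <= s)%N = false); last by lia.
  rewrite (_ : (t == s) = false); last by lia.
  rewrite -eq eqxx subnn (_ : (t.+1 - t = 1)%N); last by lia.
  rewrite /= expr1 !exprS; ring.
Qed.
End Alg.

Lemma lift (D G K X v A B d : S) : D * G = K -> X * K = v -> K * A = d * D + v * B ->
  D * (G * A) = D * (d + X * (G * B)).
Proof.
move=> DG XK e; rewrite mulrA DG e -XK mulrDr (mulrCA D X) (mulrA D G) DG; ring.
Qed.

Section Rec.
Variables (v : S) (s : nat).
Hypothesis hv0 : v 0%N = 0.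
Hypothesis hX : (fps_X : S) * KK v = v.

Definition GG : S := KK v * (DD v s)^-1.
Definition PP t : S := GG * pp v s t.

Lemma rat_nz k : (1 - 0) * ((1:rat) + 0) ^+ k != 0.
Proof. by rewrite ?subr0 ?addr0 expr1n mulr1 oner_neq0. Qed.

Lemma DDunit : DD v s \is a GRing.unit.
Proof.
rewrite unitS /DD c0_mul c0_exp !c0_add c0_opp hv0 c0_one; exact: rat_nz.
Qed.

Lemma DG : DD v s * GG = KK v.
Proof. by rewrite /GG mulrCA mulrV ?mulr1 // DDunit. Qed.

Lemma E1P t : PP t.+1 - PP t = (@dd S s t.+1 - @dd S s t) + (fps_X : S) * (PP t.+2 - PP t.+1 + PP t).
Proof.
apply: (mulrI DDunit); rewrite /PP -!mulrBr -mulrDr.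
by apply: lift; [exact: DG | exact: hX | rewrite e1 mulrC].
Qed.

Lemma E0P : PP 0 = @dd S s 0 + (fps_X : S) * PP 1.
Proof.
apply: (mulrI DDunit); rewrite /PP.
by apply: lift; [exact: DG | exact: hX | rewrite e0].
Qed.

Lemma recP t : PP t = @dd S s t + (fps_X : S) * (PP t.+1 + \sum_(m < t) PP m).
Proof.
elim: t => [|t IH]; first by rewrite big_ord0 addr0 E0P.
rewrite big_ord_recr /=.
have := E1P t; move/eqP; rewrite subr_eq => /eqP ->.
rewrite IH; ring.
Qed.

Lemma PP0 t : PP t 0%N = (t == s)%:R.
Proof. by rewrite recP cD cX0 addr0 /dd cnat mul1r. Qed.

Lemma PPS t n : PP t n.+1 = PP t.+1 n + \sum_(m < t) PP m n.
Proof. by rewrite recP cD cXS cD csum /dd cnat mul0r add0r. Qed.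
End Rec.
Lemma foldl_sum (a : int) (s : seq int) : foldl +%R a s = a + \sum_(x <- s) x.
Proof.
elim: s a => [|x s IH] a /=; first by rewrite big_nil addr0.
by rewrite IH big_cons addrA.
Qed.

Lemma heights_rcons q y : path_heights (rcons q y) = rcons (path_heights q) (\sum_(x <- q) x + y).
Proof.
rewrite /path_heights scanl_rcons foldl_sum add0r /=; congr (_ :: _); congr rcons; by rewrite -cats1 big_cat big_seq1.
Qed.

Lemma sum_in_heights q : \sum_(x <- q) x \in path_heights q.
Proof.
case/lastP: q => [|q y]; first by rewrite big_nil /path_heights inE.
rewrite heights_rcons mem_rcons inE; apply/orP; left; apply/eqP; by rewrite -cats1 big_cat big_seq1.
Qed.

Lemma bdp0 H i p : bounded_deutsch_path 0 H i p = [&& p == [::], 0 <= H & i == 0].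
Proof.
case: p => [|x p] //=; rewrite /bounded_deutsch_path /= big_nil /= andbT.
by rewrite eq_sym.
Qed.

Lemma bdp_rcons n H i q y : bounded_deutsch_path n.+1 H i (rcons q y) =
  [&& bounded_deutsch_path n H (i - y) q, deutsch_step y & i <= H].
Proof.
rewrite /bounded_deutsch_path size_rcons eqSS all_rcons heights_rcons all_rcons -cats1 big_cat big_seq1 /=.
have [e|ne] := eqVneq (\sum_(x <- q) x) (i - y).
  rewrite e subrK !eqxx !andbT.
  by case: (size q == n) (deutsch_step y) (i <= H) (0 <= H) (all deutsch_step q) (all (<=%R^~ H) (scanl +%R 0 q)) => [] [] [] [] [] [].
rewrite !andbF /=; apply/negbTE/negP => /and4P [_ _ _ /eqP E].
by move/eqP: ne; apply; rewrite -E addrK.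
Qed.

Section Enum.
Variable h : nat.

Fixpoint E (n t : nat) : seq (seq int) :=
  match n with
  | 0%N => if t == h then [:: [::]] else [::]
  | n'.+1 => [seq rcons q (x%:Z - t%:Z) | x <- t.+1 :: iota 0 t, q <- E n' x]
  end.

Lemma E_mem n t p : (p \in E n t) = bounded_deutsch_path n h%:Z (h%:Z - t%:Z) p.
Proof.
elim: n t p => [|n IH] t p.
  rewrite bdp0 /=; case: eqP => [->|ne]; rewrite ?inE.
    by rewrite subrr eqxx andbT.
  rewrite in_nil (_ : (h%:Z - t%:Z == 0) = false) ?andbF //; lia.
case/lastP: p => [|q y].
  rewrite (_ : bounded_deutsch_path _ _ _ [::] = false) //; apply/negbTE/negP => /allpairsPdep.
  by case=> x [q' [_ _]]; case: q'.
rewrite bdp_rcons.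
apply/allpairsPdep/idP.
  case=> x [q' [xs qE]] /rcons_inj [-> ->]; move: qE; rewrite IH.
  move: xs; rewrite inE mem_iota add0n => xs.
  rewrite /deutsch_step (_ : h%:Z - t%:Z - (x%:Z - t%:Z) = h%:Z - x%:Z); last lia.
  move=> ->; rewrite /=.
  case/orP: xs => [/eqP->|/andP[_ xt]]; apply/andP; split;
    [apply/orP; left; apply/eqP; lia | lia | apply/orP; right; lia | lia].
case/and3P => Hq Hy _.
have Hs : \sum_(z <- q) z <= h%:Z.
  move: Hq; rewrite /bounded_deutsch_path => /and4P [_ _ /allP Ha _].
  exact: (Ha _ (sum_in_heights q)).
have Hsum : \sum_(z <- q) z = h%:Z - t%:Z - y.
  by move: Hq; rewrite /bounded_deutsch_path => /and4P [_ _ _ /eqP].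
have [x Hx] : exists x : nat, t%:Z + y = x%:Z.
  exists (absz (t%:Z + y)); rewrite gez0_abs //; lia.
exists x, q; split.
- rewrite inE mem_iota add0n; move: Hy; rewrite /deutsch_step => /orP [/eqP Hy|Hy].
    apply/orP; left; apply/eqP; lia.
  apply/orP; right; apply/andP; split; lia.
- change (q \in E n x); rewrite IH.
  by rewrite (_ : h%:Z - x%:Z = h%:Z - t%:Z - y) //; lia.
- congr rcons; lia.
Qed.

Lemma E_uniq n t : uniq (E n t).
Proof.
elim: n t => [|n IH] t; first by rewrite /=; case: eqP.
change (uniq [seq rcons q (x%:Z - t%:Z) | x <- t.+1 :: iota 0 t, q <- E n x]).
apply: allpairs_uniq_dep.
- rewrite /= iota_uniq mem_iota andbT; apply/negP; lia.
- by move=> x _; exact: IH.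
- move=> [x1 q1] [x2 q2] _ _ /= /rcons_inj [-> /eqP].
  rewrite (inj_eq (addIr _)) => /eqP [->] //.
Qed.

Lemma E_size n t : size (E n.+1 t) = (size (E n t.+1) + \sum_(m < t) size (E n m))%N.
Proof.
change (size [seq rcons q (x%:Z - t%:Z) | x <- t.+1 :: iota 0 t, q <- E n x] =
  (size (E n t.+1) + \sum_(m < t) size (E n m))%N).
rewrite size_allpairs_dep /=; congr addn.
by rewrite sumnE big_map (_ : iota 0 t = index_iota 0 t) ?big_mkord // /index_iota subn0.
Qed.
End Enum.

Lemma mulSE (f g : fps) : fps_mul f g = (f : S) * (g : S). Proof. by []. Qed.
Lemma addSE (f g : fps) : fps_add f g = (f : S) + (g : S). Proof. by []. Qed.
Lemma subSE (f g : fps) : fps_sub f g = (f : S) - (g : S). Proof. by []. Qed.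
Lemma oneSE : fps_C 1 = (1 : S). Proof. by []. Qed.
Lemma powSE (f : fps) m : fps_pow f m = (f : S) ^+ m.
Proof. by elim: m => [|m IH] //; rewrite exprS -IH. Qed.
Lemma invSE (f : fps) : f 0%N != 0 -> fps_inv f = (f : S)^-1.
Proof. by move=> H; rewrite /GRing.inv /= /S_inv H. Qed.
Lemma divSE (f g : fps) : g 0%N != 0 -> fps_div f g = (f : S) * (g : S)^-1.
Proof. by move=> H; rewrite /fps_div invSE. Qed.
Lemma eq_app (f g : S) n : f = g -> f n = g n.
Proof. by move->. Qed.

Section Units.
Variable v : S.
Hypothesis hv0 : v 0%N = 0.
Lemma c0_1pv : (1 + v) 0%N = 1.
Proof. by rewrite c0_add hv0 c0_one addr0. Qed.
Lemma c0_1mv : (1 - v) 0%N = 1.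
Proof. by rewrite c0_add c0_opp hv0 c0_one subr0. Qed.
Lemma c0_K : (1 + v + v * v) 0%N = 1.
Proof. by rewrite c0_add c0_mul c0_1pv hv0 mulr0 addr0. Qed.
Lemma U_1pv : (1 + v) \is a GRing.unit.
Proof. by rewrite unitS c0_1pv oner_neq0. Qed.
Lemma U_1mv : (1 - v) \is a GRing.unit.
Proof. by rewrite unitS c0_1mv oner_neq0. Qed.
Lemma U_K : (1 + v + v * v) \is a GRing.unit.
Proof. by rewrite unitS c0_K oner_neq0. Qed.
End Units.
Lemma mul_unit_id (x u : S) : u \is a GRing.unit -> x = x * (u * u^-1).
Proof. by move=> U; rewrite mulrV ?mulr1. Qed.

Lemma count_eq (v : S) (h : nat) : v 0%N = 0 -> (fps_X : S) * KK v = v ->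
  forall n t, ((size (E h n t))%:R : rat) = PP v h t n.
Proof.
move=> hv0 hX; elim=> [|n IH] t.
  by rewrite PP0 //=; case: eqP.
by rewrite E_size natrD natr_sum PPS // IH; congr (_ + _); apply: eq_bigr => m _; rewrite IH.
Qed.

Lemma main7 (h : nat) (i : int) (Phi : fps) (v : S) :
  i <= h%:Z ->
  (forall n, is_count (bounded_deutsch_path n h%:Z i) (Phi n)) ->
  v 0%N = 0 ->
  fps_X = fps_div v (fps_add (fps_add (fps_C 1) v) (fps_mul v v)) ->
  (i < 0 ->
     Phi =1 fps_div
       (fps_mul (fps_mul (fps_mul (fps_zpow (fps_add (fps_C 1) v) (- i - 2)) v)
                         (fps_sub (fps_C 1) (fps_pow v h.+1)))
                (fps_add (fps_add (fps_C 1) v) (fps_mul v v)))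
       (fps_sub (fps_C 1) v)) /\
  (0 <= i ->
     Phi =1 fps_div
       (fps_mul (fps_mul (fps_zpow v i)
                         (fps_sub (fps_C 1) (fps_zpow v (2 - i + h%:Z))))
                (fps_add (fps_add (fps_C 1) v) (fps_mul v v)))
       (fps_mul (fps_sub (fps_C 1) v) (fps_zpow (fps_add (fps_C 1) v) (i + 2)))).
Proof.
move=> hi hPhi hv0 hXd.
have hX : (fps_X : S) * KK v = v.
  rewrite hXd divSE; last by rewrite !addSE mulSE oneSE c0_K // oner_neq0.
  by rewrite /KK -mulrA mulVr ?mulr1 //; exact: U_K.
have [t ht] : exists t : nat, i = h%:Z - t%:Z.
  exists (absz (h%:Z - i)); rewrite gez0_abs; lia.
have PhiE : forall n, Phi n = PP v h t n.
  move=> n; have [s0 [us ms ->]] := hPhi n.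
  rewrite -(@count_eq v h hv0 hX); congr (_%:R); apply: perm_size; apply: uniq_perm => //.
    exact: E_uniq.
  by move=> p; rewrite ms E_mem -ht.
have Ua := U_1pv hv0; have Um := U_1mv hv0; have UK := U_K hv0.
have Uah : forall k, (1 + v) ^+ k \is a GRing.unit by move=> k; rewrite unitrX.
split.
- move=> ineg n; rewrite PhiE; apply: eq_app.
  rewrite divSE; last by rewrite subSE oneSE c0_1mv // oner_neq0.
  rewrite !mulSE !subSE !addSE !oneSE !powSE.
  rewrite /PP /GG /pp /DD /KK ifF; last by apply/negbTE; lia.
  have [e|lt] : (t = h.+1 \/ h.+2 <= t)%N by lia.
    rewrite (_ : - i - 2 = Negz 0); last by rewrite NegzE; lia.
    rewrite /fps_zpow powSE expr1 invSE; last by rewrite c0_1pv // oner_neq0.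
    rewrite e exprSr !invrM ?unitrM ?Uah //.
    rewrite [RHS](mul_unit_id _ (Uah h.+1)).
    ring.
  rewrite (_ : - i - 2 = Posz (t - h.+2)); last lia.
  rewrite /fps_zpow powSE.
  have [m em] : exists m, t = (m + h.+2)%N by exists (t - h.+2)%N; lia.
  rewrite em addnK exprD.
  rewrite invrM ?Um ?Uah //.
  rewrite [RHS](mul_unit_id _ (Uah h.+2)).
  ring.
- move=> ipos n; rewrite PhiE; apply: eq_app.
  rewrite (_ : 2 - i + h%:Z = Posz t.+2); last lia.
  rewrite (_ : i + 2 = Posz (h - t)%N.+2); last lia.
  rewrite (_ : i = Posz (h - t)%N); last lia.
  rewrite /fps_zpow !powSE.
  rewrite divSE; last first.
    by rewrite mulSE subSE addSE oneSE c0_mul c0_1mv // c0_exp c0_1pv // expr1n mulr1 oner_neq0.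
  rewrite !mulSE !subSE !addSE !oneSE.
  rewrite /PP /GG /pp /DD /KK ifT; last by lia.
  have [m em] : exists m, h = (m + t)%N by exists (h - t)%N; lia.
  rewrite em addnK (_ : (m + t).+2 = (m.+2 + t)%N) // exprD.
  rewrite (@invrM _ (1 - v)) ?Um //; last by rewrite unitrM !Uah.
  rewrite (@invrM _ ((1 + v) ^+ m.+2)) ?Uah //.
  rewrite (@invrM _ (1 - v)) ?Um ?Uah //.
  rewrite [RHS](mul_unit_id _ (Uah t)); ring.
Qed.

Unset Implicit Arguments.

Theorem theorem7 (h : nat) (i : int) (Phi v : fps) :
  i <= h%:Z ->
  (forall n, is_count (bounded_deutsch_path n h%:Z i) (Phi n)) ->
  v 0%N = 0 ->
  fps_X = fps_div v (fps_add (fps_add (fps_C 1) v) (fps_mul v v)) ->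
  (i < 0 ->
     Phi =1 fps_div
       (fps_mul (fps_mul (fps_mul (fps_zpow (fps_add (fps_C 1) v) (- i - 2)) v)
                         (fps_sub (fps_C 1) (fps_pow v h.+1)))
                (fps_add (fps_add (fps_C 1) v) (fps_mul v v)))
       (fps_sub (fps_C 1) v)) /\
  (0 <= i ->
     Phi =1 fps_div
       (fps_mul (fps_mul (fps_zpow v i)
                         (fps_sub (fps_C 1) (fps_zpow v (2 - i + h%:Z))))
                (fps_add (fps_add (fps_C 1) v) (fps_mul v v)))
       (fps_mul (fps_sub (fps_C 1) v) (fps_zpow (fps_add (fps_C 1) v) (i + 2)))).
Proof. exact: (@main7 h i Phi v). Qed.
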